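(* Let $U$ be a finite set of attributes, $\varphi$ a standard closure operator on $U$, and $X\subseteq U$. Let $\mathrm{LCD}(Y,\Sigma)$ denote the output of the algorithm LinClosureDirect described below on input set $Y\subseteq U$ and implication set $\Sigma$. (i) If $\Sigma$ is the canonical direct unit basis of $\varphi$, then $\mathrm{LCD}(X,\Sigma)=\varphi(X)$. (ii) If $\Sigma$ is the D-basis of $\varphi$, then $\mathrm{LCD}(\varphi_0(X),\Sigma)=\varphi(X)$.
   Context: An implication over $U$ is a pair $A\to B$ with $A,B\subseteq U$; closure $\Sigma(X)$ w.r.t. a set of implications $\Sigma$ is the smallest superset of $X$ that contains $B$ whenever it contains $A$, for each $A\to B\in\Sigma$. A closure operator $\varphi$ on $U$ is standard if for every $a\in U$ the set $\varphi(a)\setminus\{a\}$ is closed, and $\varphi(a)\neq\varphi(b)$ for $a\neq b$. For $c\in U$, $A\subseteq U$ is a minimal generator of $c$ if $c\in\varphi(A)$, $c\notin A$, and no proper subset $A'\subsetneq A$ has $c\in\varphi(A')$. Canonical direct unit basis: $\{A\to c \mid c\in U,\ A \text{ a minimal generator of } c\}$. D-basis: let $\Sigma_0=\{a\to c\mid a,c\in U,\ c\in\varphi(a)\setminus\{a\}\}$ and $\varphi_0(X)$ the closure of $X$ w.r.t. $\Sigma_0$. A minimal generator $A$ of $c$ with $|A|\ge2$ is a minimal D-generator of $c$ if $c\notin\varphi_0(A)$ and for every minimal generator $A'$ of $c$, $A'\subseteq\varphi_0(A)$ implies $A'=A$. The D-basis is $\Sigma_0\cup\{A\to c\mid c\in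 U,\ A\text{ a minimal D-generator of }c\}$. In both bases, implications with equal left-hand side may be merged into a single implication whose right-hand side is the union; all left-hand sides are nonempty. Algorithm LinClosureDirect on input $(Y,\Sigma)$: for each $A\to B\in\Sigma$ set $count[A\to B]:=|A|$, and for each $a\in U$ let $list[a]$ be the set of implications $A\to B\in\Sigma$ with $a\in A$. Set $update:=Y$ and $add:=\emptyset$. While $update\neq\emptyset$: choose $m\in update$, remove $m$ from $update$, and for each $A\to B\in list[m]$ decrement $count[A\to B]$ by one and, if it becomes $0$, set $add:=add\cup B$. Return $Y\cup add$. (Note $update$ is never enlarged.) *)

(* Defs.v *)
From mathcomp Require Import all_boot.
Set Implicit Arguments. Unset Strict Implicit. Unset Printing Implicit Defensive.

Section Defs.
Variable U : finType.

Definition impl := ({set U} * {set U})%type.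

Definition closure_op (phi : {set U} -> {set U}) : Prop :=
  [/\ forall X : {set U}, X \subset phi X,
      forall X Y : {set U}, X \subset Y -> phi X \subset phi Y &
      forall X : {set U}, phi (phi X) = phi X].

Definition standard (phi : {set U} -> {set U}) : Prop :=
  (forall a : U, phi (phi [set a] :\ a) = phi [set a] :\ a) /\
  (forall a b : U, a != b -> phi [set a] != phi [set b]).

Definition impl_closed (S : {set impl}) (Y : {set U}) : bool :=
  [forall f in S, (f.1 \subset Y) ==> (f.2 \subset Y)].

Definition impl_closure (S : {set impl}) (X : {set U}) : {set U} :=
  \bigcap_(Y : {set U} | (X \subset Y) && impl_closed S Y) Y.

Definition min_gen (phi : {set U} -> {set U}) (c : U) (A : {set U}) : bool :=
  [&& c \in phi A, c \notin A &
      [forall A' : {set U}, (A' \proper A) ==> (c \notin phi A')]].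

(* Canonical direct unit basis (unmerged). *)
Definition CDUB (phi : {set U} -> {set U}) : {set impl} :=
  [set f : impl | [exists c : U, (f.2 == [set c]) && min_gen phi c f.1]].

Definition Sigma0 (phi : {set U} -> {set U}) : {set impl} :=
  [set f : impl | [exists a : U, exists c : U,
     [&& f.1 == [set a], f.2 == [set c] & c \in phi [set a] :\ a]]].

Definition phi0 (phi : {set U} -> {set U}) (X : {set U}) : {set U} :=
  impl_closure (Sigma0 phi) X.

Definition min_Dgen (phi : {set U} -> {set U}) (c : U) (A : {set U}) : bool :=
  [&& min_gen phi c A, 2 <= #|A|, c \notin phi0 phi A &
      [forall A' : {set U}, (min_gen phi c A' && (A' \subset phi0 phi A)) ==> (A' == A)]].

(* D-basis (unmerged). *)
Definition Dbasis (phi : {set U} -> {set U}) : {set impl} :=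
  Sigma0 phi :|:
  [set f : impl | [exists c : U, (f.2 == [set c]) && min_Dgen phi c f.1]].

Definition merge_impl (S : {set impl}) : {set impl} :=
  [set (f.1, \bigcup_(g in S | g.1 == f.1) g.2) | f in S].

(* State: counters (indexed by implications) and the set "add". *)
Definition lcd_step (S : {set impl}) (st : {ffun impl -> nat} * {set U}) (m : U)
  : {ffun impl -> nat} * {set U} :=
  let: (cnt, add) := st in
  (* for each A -> B in list[m]: decrement count; if it becomes 0, add B.
     "becomes 0 after decrementing" is "was 1 before decrementing". *)
  ([ffun f => if (f \in S) && (m \in f.1) then (cnt f).-1 else cnt f],
   add :|: \bigcup_(f in S | (m \in f.1) && (cnt f == 1)) f.2).

(* Run on input (Y, S), with the elements of update = Y chosen in the
   order given by the sequence [order] (a duplicate-free enumeration of Y). *)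
Definition LCD (S : {set impl}) (Y : {set U}) (order : seq U) : {set U} :=
  let init := ([ffun f : impl => #|f.1|], (set0 : {set U})) in
  Y :|: (foldl (lcd_step S) init order).2.

End Defs.

(* Main.v *)
Require Import Defs.
From mathcomp Require Import all_boot.
Set Implicit Arguments. Unset Strict Implicit. Unset Printing Implicit Defensive.

Section L.
Variable U : finType.
Implicit Types (S : {set impl U}) (P Y : {set U}).

Definition Inv S P (st : {ffun impl U -> nat} * {set U}) :=
  (forall f, st.1 f = if f \in S then #|f.1 :\: P| else #|f.1|) /\
  (forall x, (x \in st.2) = [exists g in S, [&& g.1 != set0, g.1 \subset P & x \in g.2]]).

Lemma Inv_step S P st m : m \notin P -> Inv S P st -> Inv S (m |: P) (lcd_step S st m).
Proof.
case: st => cnt add mP [Hc Ha]; split => [f|x] /=.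
  rewrite ffunE Hc; case fS: (f \in S) => //=.
  case mf: (m \in f.1) => /=.
    rewrite (cardsD1 m (f.1 :\: P)) inE mf (negbTE mP) /=.
    rewrite add0n; apply: eq_card => y; rewrite !inE; by case: (y == m).
  apply: eq_card => y; rewrite !inE; case: eqP => // ->; by rewrite mf andbF.
rewrite inE Ha; apply/idP/idP.
  case/orP.
    case/existsP => g /and4P [gS g0 gP xg]; apply/existsP; exists g.
    rewrite gS g0 xg /= andbT; apply: subset_trans gP _; exact: subsetUr.
  case/bigcupP => g /and3P [gS mg]; rewrite Hc gS => /eqP c1 xg.
  apply/existsP; exists g; rewrite gS xg andbT /=.
  apply/andP; split; first by apply/set0Pn; exists m.
  apply/subsetP => y yg; rewrite !inE; case: eqP => //= ym.
  apply/negPn/negP => yP.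
  have : 1 < #|g.1 :\: P|.
    rewrite (cardsD1 m (g.1 :\: P)) inE mg (negbTE mP) /=.
    rewrite add1n ltnS card_gt0; apply/set0Pn; exists y.
    rewrite !inE yg yP andbT andbT; exact/eqP.
  by rewrite c1.
case/existsP => g /and4P [gS g0 gP xg].
case mg: (m \in g.1).
  case hP: (g.1 \subset P).
    apply/orP; left; apply/existsP; exists g; by rewrite gS g0 hP xg.
  apply/orP; right; apply/bigcupP; exists g => //; rewrite gS mg Hc gS /=.
  have -> : g.1 :\: P = [set m].
    apply/setP => y; rewrite !inE; case: eqP => [->|ym]; first by rewrite mP mg.
    apply/negbTE; apply/negP => /andP [yP yg].
    by move/subsetP: gP => /(_ y yg); rewrite !inE (introF eqP ym) /= (negbTE yP).
  by rewrite cards1.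
apply/orP; left; apply/existsP; exists g; rewrite gS g0 xg andbT /=.
apply/subsetP => y yg; move/subsetP: gP => /(_ y yg); rewrite !inE.
case: eqP => //= ym; by move: mg; rewrite -ym yg.
Qed.

Lemma Inv_fold S P st s : uniq s -> [disjoint s & P] -> Inv S P st ->
  Inv S ([set x in s] :|: P) (foldl (lcd_step S) st s).
Proof.
elim: s P st => [|m s IH] P st /=.
  move=> _ _ H; suff -> : [set x in [::]] :|: P = P by [].
  by apply/setP => y; rewrite !inE.
case/andP => ms us; rewrite disjoint_cons => /andP [mP dP] H.
have -> : [set x in m :: s] :|: P = [set x in s] :|: (m |: P).
  by apply/setP => y; rewrite !inE; case: (y == m); rewrite ?orbT.
apply: IH => //; last exact: Inv_step.
rewrite disjoint_subset; apply/subsetP => y ys; rewrite !inE; case: eqP => [ym|_] /=; first by move: ms; rewrite -ym ys.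
by rewrite (disjointFr dP ys).
Qed.

Definition RR S Y := Y :|: [set x | [exists g in S, [&& g.1 != set0, g.1 \subset Y & x \in g.2]]].

Lemma LCD_eq S Y order : perm_eq order (enum Y) -> LCD S Y order = RR S Y.
Proof.
move=> pe.
have us : uniq order by rewrite (perm_uniq pe) enum_uniq.
have eY : [set x in order] :|: set0 = Y.
  by apply/setP => y; rewrite !inE (perm_mem pe) mem_enum orbF.
have := @Inv_fold S set0 ([ffun f : impl U => #|f.1|], set0) order us.
have d0 : [disjoint order & (set0 : {set U})].
  by rewrite disjoint_subset; apply/subsetP => y; rewrite !inE.
rewrite eY => H; have [|_ H2] := H d0.
  split => [f|x] /=; first by rewrite ffunE setD0; case: (f \in S).
  rewrite inE; symmetry; apply/negbTE; apply/existsP => [[g /and4P [_ g0 gs _]]].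
  by move: g0; rewrite subset0 in gs; rewrite gs.
rewrite /LCD /RR; congr (_ :|: _); apply/setP => x; by rewrite H2 inE.
Qed.
End L.

Section M.
Variable U : finType.
Implicit Types (S : {set impl U}) (P Y X A : {set U}).

Lemma RR_merge S Y : RR (merge_impl S) Y = RR S Y.
Proof.
apply/setP => x; rewrite !inE; congr (_ || _); apply/idP/idP.
  case/existsP => g /and4P [] /imsetP [f fS ->] /= f0 fY /bigcupP [h /andP [hS /eqP hf] xh].
  apply/existsP; exists h; by rewrite hS hf f0 fY xh.
case/existsP => g /and4P [gS g0 gY xg]; apply/existsP.
exists (g.1, \bigcup_(h in S | h.1 == g.1) h.2).
rewrite /merge_impl; rewrite (imset_f (fun f : impl U => (f.1, \bigcup_(g in S | g.1 == f.1) g.2)) gS) /=.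
rewrite g0 gY /=; apply/bigcupP; exists g => //; by rewrite gS eqxx.
Qed.

Variable phi : {set U} -> {set U}.
Hypothesis Hc : closure_op phi.
Hypothesis Hs : standard phi.

Lemma ext X : X \subset phi X. Proof. by case: Hc. Qed.
Lemma mono X Y : X \subset Y -> phi X \subset phi Y. Proof. by case: Hc => _ H _; apply: H. Qed.
Lemma idem X : phi (phi X) = phi X. Proof. by case: Hc. Qed.
Lemma mono2 X Y : X \subset phi Y -> phi X \subset phi Y.
Proof. by move=> H; rewrite -(idem Y); apply: mono. Qed.

Lemma phi_set0 : phi set0 = set0.
Proof.
apply/setP => a; rewrite inE; apply/negbTE/negP => H.
case: Hs => H1 _.
have : phi set0 \subset phi [set a] :\ a by rewrite -H1; apply: mono; exact: sub0set.
by move/subsetP => /(_ a H); rewrite !inE eqxx.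
Qed.

Lemma Sigma0_closed_phi X : impl_closed (Sigma0 phi) (phi X).
Proof.
apply/forallP => f; apply/implyP => /[!inE] /existsP [a /existsP [c /and3P [/eqP e1 /eqP e2 cin]]].
apply/implyP; rewrite e1 e2 !sub1set => aX.
move: cin; rewrite inE => /andP [_ ca].
have : [set a] \subset phi X by rewrite sub1set.
by move/mono2/subsetP; apply.
Qed.

Lemma phi0_ext X : X \subset phi0 phi X.
Proof. by apply/bigcapsP => Y /andP []. Qed.

Lemma phi0_phi X : phi0 phi X \subset phi X.
Proof. apply: bigcap_inf; by rewrite ext Sigma0_closed_phi. Qed.

Lemma phi0_closed X : impl_closed (Sigma0 phi) (phi0 phi X).
Proof.
apply/forallP => f; apply/implyP => fS; apply/implyP => f1.
apply/bigcapsP => Y /andP [XY cY].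
have fY : f.1 \subset Y by apply: subset_trans f1 _; apply: bigcap_inf; rewrite XY cY.
by move/forallP: cY => /(_ f); rewrite fS fY.
Qed.

Lemma phi0_step X a c : a \in phi0 phi X -> c \in phi [set a] -> c \in phi0 phi X.
Proof.
move=> aX ca; case: (eqVneq c a) => [->//|ne].
have fS : ([set a], [set c]) \in Sigma0 phi.
  rewrite inE; apply/existsP; exists a; apply/existsP; exists c; by rewrite !eqxx !inE ne ca.
move/forallP: (phi0_closed X) => /(_ ([set a], [set c])).
by rewrite fS /= !sub1set aX.
Qed.

Lemma phi0_min X A : A \subset phi0 phi X -> phi0 phi A \subset phi0 phi X.
Proof. move=> H; apply: bigcap_inf; by rewrite H phi0_closed. Qed.

Definition DD X := \bigcup_(a in X) phi [set a].

Lemma DD_closed X : impl_closed (Sigma0 phi) (DD X).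
Proof.
apply/forallP => f; apply/implyP => /[!inE] /existsP [a /existsP [c /and3P [/eqP e1 /eqP e2 cin]]].
apply/implyP; rewrite e1 e2 !sub1set => /bigcupP [b bX ab].
apply/bigcupP; exists b => //.
move: cin; rewrite inE => /andP [_ ca].
have : [set a] \subset phi [set b] by rewrite sub1set.
by move/mono2/subsetP; apply.
Qed.

Lemma phi0_DD X x : x \in phi0 phi X -> exists2 a, a \in X & x \in phi [set a].
Proof.
move=> H; have : x \in DD X.
  have : phi0 phi X \subset DD X.
    apply: bigcap_inf; rewrite DD_closed andbT.
 apply/subsetP => y yX; apply/bigcupP; exists y => //.
  by move/subsetP: (ext [set y]); apply; rewrite inE.
  by move/subsetP; apply.
by case/bigcupP => a aX xa; exists a.
Qed.

End M.

Section N.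
Variable U : finType.
Implicit Types (S : {set impl U}) (P Y X A : {set U}).
Variable phi : {set U} -> {set U}.
Hypothesis Hc : closure_op phi.
Hypothesis Hs : standard phi.

Lemma exists_mingen Y c : c \in phi Y -> c \notin Y -> exists A, min_gen phi c A && (A \subset Y).
Proof.
move=> cY ncY.
have P0 : (Y \subset Y) && (c \in phi Y) by rewrite subxx cY.
case: (@arg_minnP _ Y (fun A => (A \subset Y) && (c \in phi A)) (fun A : {set U} => #|A|) P0) => A /andP [AY cA] Amin.
exists A; rewrite AY andbT /min_gen cA /=.
apply/andP; split; first by apply: contra ncY; move/subsetP: AY; apply.
apply/forallP => B; apply/implyP => BA; apply/negP => cB.
have : #|A| <= #|B| by apply: Amin; rewrite cB andbT; apply: subset_trans AY; exact: proper_sub.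
by rewrite leqNgt proper_card.
Qed.

Lemma mingen_n0 c A : min_gen phi c A -> A != set0.
Proof.
case/and3P => cA _ _; apply/negP => /eqP A0; move: cA; by rewrite A0 (phi_set0 Hc Hs) inE.
Qed.

Lemma antichain c A a b : min_gen phi c A -> a \in A -> b \in A -> a \in phi [set b] -> a = b.
Proof.
move=> /and3P [cA _ /forallP mA] aA bA ab; apply/eqP/negP => /negP ne.
have pr : A :\ a \proper A by rewrite properD1.
move: (mA (A :\ a)); rewrite pr /= => /negP; apply.
have : A \subset phi (A :\ a).
  apply/subsetP => y yA; case: (eqVneq y a) => [->|yn].
    have : [set b] \subset A :\ a by rewrite sub1set !inE bA eq_sym ne.
    by move/(mono Hc)/subsetP; apply.
  by move/subsetP: (ext Hc (A :\ a)); apply; rewrite !inE yn.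
by move/(mono2 Hc)/subsetP; apply.
Qed.

Lemma trans1 a b d : a \in phi [set b] -> b \in phi [set d] -> a \in phi [set d].
Proof.
move=> ab bd; have : [set b] \subset phi [set d] by rewrite sub1set.
by move/(mono2 Hc)/subsetP; apply.
Qed.

Lemma key c A A' : min_gen phi c A -> min_gen phi c A' ->
  A \subset phi0 phi A' -> A' \subset phi0 phi A -> A = A'.
Proof.
move=> mA mA' s1 s2.
have sub : A \subset A'.
  apply/subsetP => a aA.
  have [a' a'A' aa'] := phi0_DD Hc (subsetP s1 a aA).
  have [a'' a''A a'a''] := phi0_DD Hc (subsetP s2 a' a'A').
  have e := antichain mA aA a''A (trans1 aa' a'a'').
  subst a''.
  case: (eqVneq a a') => [->//|ne].
  case: Hs => _ /(_ a a' ne) /negP []; apply/eqP/eqP; rewrite eqEsubset.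
  apply/andP; split; apply: (mono2 Hc); by rewrite sub1set.
apply/eqP; apply/negPn/negP => ne.
have pr : A \proper A' by rewrite properEneq ne sub.
case/and3P: mA' => _ _ /forallP /(_ A); rewrite pr /=.
by case/and3P: mA => ->.
Qed.

Lemma main1 X : RR (CDUB phi) X = phi X.
Proof.
apply/setP => x; rewrite !inE; apply/idP/idP.
  case/orP => [xX|]; first by move/subsetP: (ext Hc X); apply.
  case/existsP => g /and4P [] /[!inE] /existsP [c /andP [/eqP g2 mg]] _ gX.
  rewrite g2 inE => /eqP ->.
  case/and3P: mg => cg _ _; by move/(mono Hc)/subsetP: gX; apply.
move=> xp; case xX: (x \in X) => //=.
have [A /andP [mA AX]] := exists_mingen xp (negbT xX).
apply/existsP; exists (A, [set x]) => /=.
rewrite inE (mingen_n0 mA) AX !inE eqxx !andbT.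
apply/existsP; exists x; by rewrite eqxx.
Qed.

Lemma main2 X : RR (Dbasis phi) (phi0 phi X) = phi X.
Proof.
set Y := phi0 phi X.
apply/setP => x; rewrite !inE; apply/idP/idP.
  case/orP => [xX|]; first by move/subsetP: (phi0_phi Hc X); apply.
  case/existsP => g /and4P [] /[!inE] /orP [].
    move=> /existsP [a /existsP [c /and3P [/eqP g1 /eqP g2 ca]]] _.
    rewrite g1 g2 sub1set inE => aY /eqP ->.
    move: ca; rewrite inE => /andP [_ ca].
    have : [set a] \subset phi X by rewrite sub1set; apply: (subsetP (phi0_phi Hc X)).
    by move/(mono2 Hc)/subsetP; apply.
  move=> /existsP [c /andP [/eqP g2 /and4P [mg _ _ _]]] _ gY.
  rewrite g2 inE => /eqP ->.
  case/and3P: mg => cg _ _.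
  have : g.1 \subset phi X by apply: subset_trans gY (phi0_phi Hc X).
  by move/(mono2 Hc)/subsetP; apply.
move=> xp; case xY: (x \in Y) => //=.
have xpY : x \in phi Y.
  by move/(mono Hc)/subsetP: (phi0_ext phi X); apply.
pose Pm := fun A : {set U} => min_gen phi x A && (A \subset Y).
have [A0 PA0] := exists_mingen xpY (negbT xY).
case: (@arg_minnP _ A0 Pm (fun A : {set U} => #|phi0 phi A|) PA0) => A /andP [mA AY] Amin.
have p0A : phi0 phi A \subset Y by apply: phi0_min.
have xnA : x \notin phi0 phi A.
  by apply/negP => /(subsetP p0A); rewrite xY.
apply/existsP; exists (A, [set x]) => /=.
rewrite (mingen_n0 mA) AY !inE eqxx !andbT; apply/orP; right.
idtac; apply/existsP; exists x; rewrite eqxx /=.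
rewrite /min_Dgen mA xnA /=.
  apply/andP; split.
  rewrite ltnNge; apply/negP => c1.
  have c0 : 0 < #|A| by rewrite card_gt0 (mingen_n0 mA).
  have /cards1P [a Aa] : #|A| == 1 by rewrite eqn_leq c1 c0.
  apply: (negP xnA); apply: (phi0_step (a := a)).
    by apply: (subsetP (phi0_ext phi A)); rewrite Aa inE.
  by case/and3P: mA; rewrite Aa.
apply/forallP => B; apply/implyP => /andP [mB BA].
have BY : B \subset Y by apply: subset_trans BA p0A.
have le1 : #|phi0 phi A| <= #|phi0 phi B| by apply: Amin; rewrite /Pm mB BY.
have sBA : phi0 phi B \subset phi0 phi A by apply: phi0_min.
have eB : phi0 phi B = phi0 phi A.
  by apply/eqP; rewrite eqEcard sBA le1.
apply/eqP; symmetry; apply: (key mA mB) => //.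
by rewrite eB; exact: phi0_ext phi A.
Qed.

End N.

Theorem proposition2 (U : finType) (phi : {set U} -> {set U}) (X : {set U}) :
  closure_op phi -> standard phi ->
  (forall Sigma : {set impl U},
     ((Sigma = CDUB phi) \/ (Sigma = merge_impl (CDUB phi))) ->
     forall order : seq U, perm_eq order (enum X) ->
       LCD Sigma X order = phi X) /\
  (forall Sigma : {set impl U},
     ((Sigma = Dbasis phi) \/ (Sigma = merge_impl (Dbasis phi))) ->
     forall order : seq U, perm_eq order (enum (phi0 phi X)) ->
       LCD Sigma (phi0 phi X) order = phi X).
Proof.
move=> Hc Hs; split => S HS order pe; rewrite LCD_eq //;
  case: HS => ->; rewrite ?RR_merge ?main1 ?main2 //.
Qed.
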